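(* Let $G$ be a finite connected graph with chromatic number $\chi$. Then either $G$ admits a proper $\chi$-coloring $c$ such that the oriented graph $D_c$ contains an oriented cycle, or for every vertex $v$ of $G$ there exists a nice $\chi$-coloring $c$ of $G$ such that $v$ is the unique sink of $D_c$.
   Context: A proper $\chi$-coloring is a map $c:V(G)\to\{1,\dots,\chi\}$ with adjacent vertices receiving different colors; colors are considered modulo $\chi$. For such a coloring $c$, $D_c$ is the oriented graph with vertex set $V(G)$ in which $ab$ is an arc if and only if $\{a,b\}$ is an edge of $G$ and $c(b)\equiv c(a)+1 \pmod{\chi}$. A sink is a vertex with no out-going arc. A proper $\chi$-coloring $c$ is called nice if $D_c$ is acyclic (contains no oriented cycle) and has exactly one sink. *)

(* Defs.v *)
From mathcomp Require Import all_boot.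
Set Implicit Arguments. Unset Strict Implicit. Unset Printing Implicit Defensive.

Section Coloring.
Variables (T : finType) (e : rel T).

Definition simple_graph : Prop := symmetric e /\ irreflexive e.

Definition connected_graph : Prop := forall x y : T, connect e x y.

(* proper k-coloring with colors in 'I_k = {0,..,k-1} (i.e. {1,..,k} shifted) *)
Definition proper_coloring (k : nat) (c : T -> 'I_k) : Prop :=
  forall a b, e a b -> c a != c b.

Definition colorable (k : nat) : Prop := exists c : T -> 'I_k, proper_coloring c.

Definition chromatic_number (chi : nat) : Prop :=
  colorable chi /\ forall k, k < chi -> ~ colorable k.

Definition Dc_arc (k : nat) (c : T -> 'I_k) : rel T :=
  fun a b => e a b && (nat_of_ord (c b) == (c a + 1) %% k).

Definition has_oriented_cycle (k : nat) (c : T -> 'I_k) : Prop :=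
  exists a b, Dc_arc c a b /\ connect (Dc_arc c) b a.

Definition acyclic (k : nat) (c : T -> 'I_k) : Prop := ~ has_oriented_cycle c.

Definition is_sink (k : nat) (c : T -> 'I_k) (v : T) : bool :=
  [forall w, ~~ Dc_arc c v w].

Definition nice_coloring (k : nat) (c : T -> 'I_k) : Prop :=
  proper_coloring c /\ acyclic c /\ #|[pred v | is_sink c v]| = 1.

End Coloring.

(* Main.v *)
Require Import Defs.
From mathcomp Require Import all_boot.
From mathcomp Require Import zify.
From Stdlib Require Import Classical.

Set Implicit Arguments. Unset Strict Implicit. Unset Printing Implicit Defensive.

Lemma exists_sink (T : finType) (r : rel T) (x0 : T) :
  ~ (exists a b, r a b /\ connect r b a) -> exists s, forall w, ~~ r s w.
Proof.
move=> acy.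
case: (arg_minnP (fun x => #|[set y | connect r x y]|) (isT : predT x0)).
move=> s _ smin; exists s => w; apply/negP => rsw.
have := smin w isT.
suff : #|[set y | connect r w y]| < #|[set y | connect r s y]| by lia.
apply: proper_card; apply/properP; split.
  apply/subsetP => y; rewrite !inE => wy.
  exact: connect_trans (connect1 rsw) wy.
exists s; first by rewrite inE connect0.
rewrite inE; apply/negP => ws; apply: acy; by exists s, w.
Qed.

Section Main.
Variables (T : finType) (e : rel T) (chi : nat) (v : T).
Hypothesis chi_pos : 0 < chi.
Hypothesis esymm : symmetric e.
Hypothesis eirr : irreflexive e.
Hypothesis conn : connected_graph e.

Definition cf (f : T -> nat) : T -> 'I_chi := fun x => Ordinal (ltn_pmod (f x) chi_pos).

Definition Inv (f : T -> nat) :=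
  (forall a b, e a b -> f a %% chi != f b %% chi) /\ (forall a b, e a b -> f a < f b + chi).

Lemma proper_cf f : Inv f -> proper_coloring e (cf f).
Proof.
move=> [H _] a b eab; apply/negP => /eqP/(congr1 val) /= /eqP.
by rewrite (negbTE (H a b eab)).
Qed.

Definition incr (f : T -> nat) w := fun x => if x == w then (f x).+1 else f x.

Lemma sink_nat f w u : is_sink e (cf f) w -> e w u -> f u %% chi != (f w).+1 %% chi.
Proof.
move=> /forallP /(_ u); rewrite /Dc_arc /= => H ewu.
rewrite ewu /= in H. by rewrite -addn1 -modnDml.
Qed.

Lemma step f w : Inv f -> is_sink e (cf f) w -> Inv (incr f w).
Proof.
move=> [H1 H2] sk; rewrite /incr; split => a b eab.
- case: (eqVneq a w) => [aw|aw]; case: (eqVneq b w) => [bw|bw].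
  + by move: eab; rewrite aw bw eirr.
  + by move: eab; rewrite aw eq_sym => eab; exact: (sink_nat sk).
  + by move: eab; rewrite bw => eab; apply: (sink_nat sk); rewrite esymm.
  + exact: H1.
- case: (eqVneq a w) => [aw|aw]; case: (eqVneq b w) => [bw|bw].
  + by move: eab; rewrite aw bw eirr.
  + move: eab; rewrite aw => eab. have := H2 _ _ eab. have := sink_nat sk eab.
    case: (ltngtP (f w).+1 (f b + chi)) => // hh.
    by move=> sk' _; move: sk'; rewrite hh modnDr eqxx.
  + have := H2 _ _ eab; rewrite bw; lia.
  + exact: H2.
Qed.

Lemma bound_path f : Inv f -> forall p w, path e w p -> last w p = v ->
  f w <= f v + size p * chi.
Proof.
move=> [_ H2]; elim=> [|x p IH] w /=.
  by move=> _ ->; lia.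
move=> /andP [ewx px] lx.
have := IH x px lx. have := H2 _ _ ewx. lia.
Qed.

Lemma bound f w : Inv f -> f v < chi -> f w < #|T| * chi.
Proof.
move=> I fv.
have /connectP [p pth lst] := conn w v.
case: (shortenP pth) lst => p' pth' uq _ lst.
have := bound_path I pth' (Logic.eq_sym lst).
move/card_uniqP: uq => /= uq.
have := max_card (mem (w :: p')); rewrite uq /=.
move=> szT h; apply: (leq_ltn_trans h).
apply: (@leq_trans ((size p').+1 * chi)); first by rewrite mulSn ltn_add2r.
by rewrite leq_mul2r szT orbT.
Qed.

Definition mu (f : T -> nat) := \sum_(x : T) (#|T| * chi - f x).

Lemma mu_incr f w : f w < #|T| * chi -> mu (incr f w) < mu f.
Proof.
move=> fw; rewrite /mu (bigD1 w) //= [X in _ < X](bigD1 w) //=.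
rewrite /incr eqxx.
rewrite (eq_bigr (fun x => #|T| * chi - f x)); last by move=> x /negbTE ->.
move: fw; set M := #|T| * chi; set S := \sum_(i | _) _; lia.
Qed.



Hypothesis Hacy : forall c : T -> 'I_chi, proper_coloring e c -> ~ has_oriented_cycle e c.

Lemma main n : forall f, mu f < n -> Inv f -> f v < chi ->
  exists c : T -> 'I_chi, nice_coloring e c /\ is_sink e c v /\
      (forall w : T, is_sink e c w -> w = v).
Proof.
elim: n => [|n IH] f // hmu I fv.
set c := cf f.
case: (pickP [pred w | is_sink e c w && (w != v)]) => [w /andP [sw wv] | none].
  apply: (IH (incr f w)).
  - have := mu_incr (bound w I fv); lia.
  - exact: step.
  - by rewrite /incr eq_sym (negbTE wv).
have acy : ~ has_oriented_cycle e c := Hacy (proper_cf I).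
have [s ss] := exists_sink v acy.
have uniqs : forall w, is_sink e c w -> w = v.
  move=> w sw; apply/eqP; have := none w; rewrite /= sw /=; by move/negbFE.
have sv : is_sink e c v.
  have ssk : is_sink e c s by apply/forallP.
  by rewrite -(uniqs s ssk).
exists c; split; last by split.
split; first exact: proper_cf.
split; first exact: acy.
rewrite -(card1 v); apply: eq_card => x; rewrite !inE.
by apply/idP/eqP => [/uniqs | ->].
Qed.

End Main.

Theorem corollary5 (T : finType) (e : rel T) (chi : nat) :
  simple_graph e -> connected_graph e -> chromatic_number e chi ->
  (exists c : T -> 'I_chi, proper_coloring e c /\ has_oriented_cycle e c) \/
  (forall v : T, exists c : T -> 'I_chi,
      nice_coloring e c /\ is_sink e c v /\
      (forall w : T, is_sink e c w -> w = v)).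
Proof.
move=> [esymm eirr] conn [[c0 pc0] _].
case: (classic (exists c : T -> 'I_chi, proper_coloring e c /\ has_oriented_cycle e c)) => [h|h].
  by left.
right => v.
have chi_pos : 0 < chi by have := ltn_ord (c0 v); lia.
have Hacy : forall c : T -> 'I_chi, proper_coloring e c -> ~ has_oriented_cycle e c.
  by move=> c pc hc; apply: h; exists c.
pose f := fun x => nat_of_ord (c0 x).
have I : Inv e chi f.
  split=> a b eab.
    rewrite /f !modn_small //; exact: (pc0 a b eab).
  rewrite /f; have := ltn_ord (c0 a); lia.
apply: (@main T e chi v chi_pos esymm eirr conn Hacy (mu chi f).+1 f) => //.
exact: ltn_ord.
Qed.
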